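(* For every $k\ge2$ and every $n\ge2$, the families $\mathrm{SLT}_k$ and $\mathrm{REG}_n^Z$ are incomparable (neither is contained in the other); likewise, for every $n\ge 2$, the families $\mathrm{SLT}$ and $\mathrm{REG}_n^Z$ are incomparable.
   Context: Strictly locally testable languages: let $V$ be an alphabet and $k\ge1$. For $B,I,E\subseteq V^k$ and $F\subseteq V^{\le k-1}$, $\mathrm{slt}(B,I,E,F)$ is the language over $V$ consisting of all words in $F$ together with all words $a_1\cdots a_n$ ($a_i\in V$, $n\ge k$) with $a_1\cdots a_k\in B$, $a_{j+1}\cdots a_{j+k}\in I$ for all $1\le j\le n-k-1$, and $a_{n-k+1}\cdots a_n\in E$. $\mathrm{SLT}_k$ is the family of languages of this form and $\mathrm{SLT}=\bigcup_{k\ge1}\mathrm{SLT}_k$. For a regular language $L\subseteq V^*$, $\mathrm{State}(L)$ is the minimum number of states of a deterministic finite automaton over $V$ with total transition function accepting $L$; $\mathrm{REG}_n^Z=\{L\text{ regular}:\mathrm{State}(L)\le n\}$. *)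

(* Defs.v *)
From mathcomp Require Import all_boot.
Set Implicit Arguments. Unset Strict Implicit. Unset Printing Implicit Defensive.

(* Membership of w = a_1...a_n in slt(B,I,E,F):
   w in F with |w| <= k-1, or |w| >= k, a_1..a_k in B,
   a_{j+1}..a_{j+k} in I for 1 <= j <= n-k-1, and a_{n-k+1}..a_n in E. *)
Definition slt_mem (V : Type) (k : nat) (B I E F : pred (seq V)) (w : seq V) : bool :=
  ((size w <= k.-1) && F w) ||
  [&& k <= size w, B (take k w),
      all (fun j => I (take k (drop j w))) (iota 1 (size w - k - 1))
    & E (drop (size w - k) w)].

Definition SLT_k (k : nat) (V : finType) (L : seq V -> Prop) : Prop :=
  exists B I E F : pred (seq V),
    [/\ {subset B <= [pred u | size u == k]},
        {subset I <= [pred u | size u == k]},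
        {subset E <= [pred u | size u == k]},
        {subset F <= [pred u | size u <= k.-1]} &
        forall w, L w <-> slt_mem k B I E F w].

Arguments SLT_k : clear implicits.

Definition SLT (V : finType) (L : seq V -> Prop) : Prop :=
  exists k, 1 <= k /\ SLT_k k V L.
Arguments SLT : clear implicits.

Record dfa (V : finType) (m : nat) := Dfa {
  dfa_start : 'I_m;
  dfa_delta : 'I_m -> V -> 'I_m;
  dfa_final : pred 'I_m }.

Definition dfa_accepts (V : finType) (m : nat) (A : dfa V m) (w : seq V) : bool :=
  dfa_final A (foldl (dfa_delta A) (dfa_start A) w).

Definition REG_Z (n : nat) (V : finType) (L : seq V -> Prop) : Prop :=
  exists m, m <= n /\ exists A : dfa V m, forall w, L w <-> dfa_accepts A w.
Arguments REG_Z : clear implicits.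

(* Main.v *)
Require Import Defs.
From mathcomp Require Import all_boot.
From mathcomp Require Import zify.

Section P1.
Variables (n k : nat).
Definition V1 := 'I_n.+1.
Definition Bk : pred (seq V1) := [pred u | size u == k].
Definition Ek : pred (seq V1) :=
  [pred u | (size u == k) && (nth ord0 u (k-2) == nth ord0 u k.-1)].
Definition F0 : pred (seq V1) := pred0.

Lemma slt_test (x a : V1) : 2 <= k ->
  slt_mem k Bk Bk Ek F0 (rcons (nseq k.-1 x) a) = (x == a).
Proof.
move=> hk; rewrite /slt_mem size_rcons size_nseq.
have -> : k.-1.+1 = k by lia.
have -> : (k <= k.-1) = false by lia.
rewrite leqnn /= subnn sub0n drop0 /=.
rewrite /Bk /Ek /= size_take size_rcons size_nseq.
have -> : k.-1.+1 = k by lia.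
rewrite ltnn eqxx /= !nth_rcons size_nseq.
have -> : k - 2 < k.-1 by lia.
rewrite ltnn eqxx nth_nseq.
have -> : k - 2 < k.-1 by lia.
by [].
Qed.

Lemma notREG : 2 <= k -> ~ REG_Z n V1 (fun w => slt_mem k Bk Bk Ek F0 w).
Proof.
move=> hk [m [hm [A HA]]].
pose f (a : V1) := foldl (dfa_delta A) (dfa_start A) (nseq k.-1 a).
case: (boolP [exists a, exists b, (a != b) && (f a == f b)]).
  move=> /existsP [a /existsP [b /andP [nab /eqP fab]]].
  have h1 := HA (rcons (nseq k.-1 a) a).
  have h2 := HA (rcons (nseq k.-1 b) a).
  rewrite !slt_test // eqxx in h1 h2.
  move: h1 h2; rewrite /dfa_accepts !foldl_rcons -/(f a) -/(f b) fab.
  move=> [h1 _] [_ h2]; have := h2 (h1 isT).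
  by rewrite eq_sym (negbTE nab).
move=> hne.
have inj : injective f.
  move=> x y fxy; apply/eqP; apply/negPn/negP => nxy.
  move/negP: hne; apply; apply/existsP; exists x; apply/existsP; exists y.
  by rewrite nxy fxy eqxx.
have := @leq_card _ _ f inj; rewrite !card_ord; lia.
Qed.
End P1.

Lemma nseq_windows (T : Type) k (B I E F : pred (seq T)) (a : T) p q :
  1 <= k -> k.+2 <= p -> k <= q ->
  slt_mem k B I E F (nseq p a) -> slt_mem k B I E F (nseq q a).
Proof.
move=> hk hp hq; rewrite /slt_mem !size_nseq.
have -> : (p <= k.-1) = false by lia.
move=> /= /and4P [_ hB hI hE]; apply/orP; right.
rewrite take_nseq in hB; last by lia.
rewrite take_nseq //.
rewrite drop_nseq in hE; rewrite drop_nseq.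
have -> : q - (q - k) = k by lia.
have e : p - (p - k) = k by lia.
rewrite e in hE; rewrite hB hE hq andbT /=.

have hI1 : I (nseq k a).
  have := allP hI 1; rewrite mem_iota drop_nseq take_nseq; last by lia.
  apply; lia.
apply/allP => j; rewrite mem_iota => hj.
rewrite drop_nseq take_nseq //; lia.
Qed.

Definition flip (s : 'I_2) : 'I_2 := if s == ord0 then ord_max else ord0.
Definition evenA : dfa unit 2 := Dfa ord0 (fun s _ => flip s) (fun s => s == ord0).

Lemma flipK : involutive flip.
Proof. by move=> [[|[|m]] Hm] //; apply: val_inj. Qed.

Lemma foldl_flip (w : seq unit) s :
  foldl (fun s _ => flip s) s w = if odd (size w) then flip s else s.
Proof.
elim: w s => [|x w IH] s //=; rewrite IH.
by case: (odd (size w)) => //=; rewrite flipK.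
Qed.

Lemma even_REG n : 2 <= n -> REG_Z n unit (fun w => ~~ odd (size w)).
Proof.
move=> hn; exists 2; split => //; exists evenA => w.
rewrite /dfa_accepts /= foldl_flip.
by case: (odd (size w)).
Qed.

Lemma even_notSLT k : 1 <= k -> ~ SLT_k k unit (fun w => ~~ odd (size w)).
Proof.
move=> hk [B [I [E [F [_ _ _ _ H]]]]].
have h1 : slt_mem k B I E F (nseq (k.*2.+2) tt).
  by apply/H; rewrite size_nseq /= odd_double.
have := @nseq_windows _ k B I E F tt _ (k.*2.+1) hk _ _ h1.
move=> /(_ ltac:(lia) ltac:(lia)) /H; rewrite size_nseq /= odd_double //.
Qed.

Theorem mainTheorem9 :
  (forall k n : nat, 2 <= k -> 2 <= n ->
     (exists (V : finType) (L : seq V -> Prop),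
        0 < #|V| /\ SLT_k k V L /\ ~ REG_Z n V L) /\
     (exists (V : finType) (L : seq V -> Prop),
        0 < #|V| /\ REG_Z n V L /\ ~ SLT_k k V L)) /\
  (forall n : nat, 2 <= n ->
     (exists (V : finType) (L : seq V -> Prop),
        0 < #|V| /\ SLT V L /\ ~ REG_Z n V L) /\
     (exists (V : finType) (L : seq V -> Prop),
        0 < #|V| /\ REG_Z n V L /\ ~ SLT V L)).
Proof.
have sltk : forall n k, SLT_k k (V1 n) (fun w => slt_mem k (Bk n k) (Bk n k) (Ek n k) (F0 n) w).
  move=> n k; exists (Bk n k), (Bk n k), (Ek n k), (F0 n); split => //.
  by move=> u; rewrite !inE /Ek /= => /andP [].
split.
  move=> k n hk hn; split.
    exists (V1 n), (fun w => slt_mem k (Bk n k) (Bk n k) (Ek n k) (F0 n) w).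
    by rewrite card_ord; split => //; split; [apply: sltk | apply: notREG].
  exists unit; exists (fun w => ~~ odd (size w)).
  rewrite card_unit; split => //; split; [exact: even_REG | apply: even_notSLT; lia].
move=> n hn; split.
  exists (V1 n), (fun w => slt_mem 2 (Bk n 2) (Bk n 2) (Ek n 2) (F0 n) w).
  rewrite card_ord; split => //; split; [by exists 2; split => //; apply: sltk | exact: notREG].
exists unit; exists (fun w => ~~ odd (size w)).
rewrite card_unit; split => //; split; [exact: even_REG |].
move=> [k [hk hS]]; exact: (@even_notSLT k hk hS).
Qed.
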